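(* Let $c,m>0$ be constants and let $f:\mathbb{Z}\to\mathbb{Z}$ be a non-decreasing map such that $f(j)-f(i)\leq j-i$ for all integers $i<j$, and $f(j)-f(i)\geq c\,(j-i)$ for all integers $i,j$ with $i+m\leq j$. Let $B$ be an integer-valued random variable with $E[|f(B)|]<+\infty$. Then $$\mathrm{Var}[f(B)]\geq c^2\left(1-\frac{2m}{c\sqrt{\mathrm{Var}[B]}}\right)\mathrm{Var}[B].$$ *)

(* Defs.v *)
From HB Require Import structures.
From mathcomp Require Import all_boot all_order all_algebra.
From mathcomp Require Import all_classical all_reals all_analysis.
Set Implicit Arguments. Unset Strict Implicit. Unset Printing Implicit Defensive.
Import Order.TTheory GRing.Theory Num.Theory.
Local Open Scope ring_scope.

Definition int_rv (T : Type) (R : realType) (B : T -> int) : T -> R :=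
  fun w => ((B w)%:~R)%R.

(* Main.v *)
Require Import Defs.
From HB Require Import structures.
From mathcomp Require Import all_boot all_order all_algebra.
From mathcomp Require Import all_classical all_reals all_analysis.
Import Order.TTheory GRing.Theory Num.Theory.
Local Open Scope ring_scope.
From mathcomp Require Import ring lra zify.
From mathcomp Require Import measurable_realfun.
Lemma key_real (R : realType) (c m b J Kk Fj Fk : R) : 0 < c -> 0 < m ->
  Kk <= b -> b < Kk + 1 -> (J <= Kk \/ Kk + 1 <= J) ->
  (J <= Kk -> Fj <= Fk) -> (Kk <= J -> Fk <= Fj) ->
  (Kk + m <= J -> c * (J - Kk) <= Fj - Fk) ->
  (J + m <= Kk -> c * (Kk - J) <= Fk - Fj) ->
  c * (J - b) ^+ 2 - c * m * `|J - b| <= (Fj - (Fk + c * (b - Kk))) * (J - b).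
Proof.
move=> c0 m0 kb bk [jk|kj] h1 h2 h3 h4; have cm0 := mulr_gt0 c0 m0.
- have jb : J - b <= 0 by lra.
  rewrite (ler0_norm jb).
  suff s : c * (b - J) - c * m <= Fk + c * (b - Kk) - Fj.
    have : 0 <= (b - J) * (Fk + c * (b - Kk) - Fj - (c * (b - J) - c * m)).
      by apply: mulr_ge0; lra.
    nra.
  have [jm|jm] := lerP (J + m) Kk.
    have := h4 jm; lra.
  have : 0 < c * (J + m - Kk) by apply: mulr_gt0; lra.
  have := h1 jk; lra.
- have jb : 0 <= J - b by lra.
  rewrite (ger0_norm jb).
  suff s : c * (J - b) - c * m <= Fj - (Fk + c * (b - Kk)).
    have : 0 <= (J - b) * (Fj - (Fk + c * (b - Kk)) - (c * (J - b) - c * m)).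
      by apply: mulr_ge0; lra.
    nra.
  have [jm|jm] := lerP (Kk + m) J.
    have := h3 jm; lra.
  have : Kk <= J by lra.
  have : 0 < c * (Kk + m - J) by apply: mulr_gt0; lra.
  move=> ? /h2; lra.
Qed.

Lemma key_int (R : realType) (c m : R) (f : int -> int) :
  0 < c -> 0 < m ->
  (forall i j : int, i <= j -> f i <= f j) ->
  (forall i j : int, i%:~R + m <= j%:~R ->
     c * (j - i)%:~R <= (f j - f i)%:~R) ->
  forall b : R, forall j : int,
  c * (j%:~R - b) ^+ 2 - c * m * `|j%:~R - b| <=
   ((f j)%:~R - ((f (Num.floor b))%:~R + c * (b - (Num.floor b)%:~R))) * (j%:~R - b).
Proof.
move=> c0 m0 fmono flow b j.
set k := Num.floor b.
have /andP[kb bk] := floor_itv b.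
rewrite -/k intrD in bk.
apply: key_real => //.
- have [jk|kj] := lerP j k; [left; by rewrite ler_int | right].
  have : (k + 1)%:~R <= j%:~R :> R by rewrite ler_int; lia.
  by rewrite intrD.
- by rewrite (ler_int R) => /fmono; rewrite (ler_int R).
- by rewrite (ler_int R) => /fmono; rewrite (ler_int R).
- by move=> /flow; rewrite !intrB.
- by move=> /flow; rewrite !intrB.
Qed.

Lemma c_le1 (R : realType) (c m : R) (f : int -> int) :
  0 < c -> 0 < m ->
  (forall i j : int, i < j -> f j - f i <= j - i) ->
  (forall i j : int, i%:~R + m <= j%:~R ->
     c * (j - i)%:~R <= (f j - f i)%:~R) -> c <= 1.
Proof.
move=> c0 m0 fup flow.
set n := Num.ceil m.
have mn := ceil_ge m; rewrite -/n in mn.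
have n0 : 0 < n by rewrite -(ltr_int R); lra.
have := flow 0 n; rewrite add0r subr0 => /(_ mn) h1.
have := fup 0 n n0; rewrite !subr0 -(ler_int R) => h2.
have n0' : (0 : R) < n%:~R by rewrite ltr0z.
have : c * n%:~R <= 1 * n%:~R by rewrite mul1r; apply: le_trans h1 h2.
by rewrite ler_pM2r.
Qed.
Lemma bound_inf (R : realType) (c m x y : R) : 0 < c -> 0 < m ->
  c * x ^+ 2 - c * m * `|x| <= y * x ->
  c ^+ 2 * x ^+ 2 <= 2 * c ^+ 2 * m ^+ 2 + 2 * y ^+ 2.
Proof.
move=> c0 m0 h.
have yx : y * x <= `|y| * `|x| by rewrite -normrM ler_norm.
have x2 : x ^+ 2 = `|x| ^+ 2 by rewrite real_normK ?num_real.
have y2 : y ^+ 2 = `|y| ^+ 2 by rewrite real_normK ?num_real.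
rewrite x2 y2 in h *.
set t := `|x| in h yx *; set z := `|y| in yx *.
have h' : c * (c * t ^+ 2) <= c * (c * m * t + z * t).
  by rewrite ler_pM2l //; lra.
have s1 : 0 <= (c * t / 2 - c * m) ^+ 2 by apply: sqr_ge0.
have s2 : 0 <= (c * t / 2 - z) ^+ 2 by apply: sqr_ge0.
nra.
Qed.

Lemma bound_fin (R : realType) (c m s x y d : R) : 0 < c -> 0 < m -> 0 < s ->
  c * x ^+ 2 - c * m * `|x| <= (y + d) * x ->
  (c ^+ 2 - c ^+ 2 * m / s) * x ^+ 2 + (- (2 * c * d)) * x + (- (c ^+ 2 * m * s))
    <= y ^+ 2.
Proof.
move=> c0 m0 s0 h.
have s1 : 0 <= (y - c * x) ^+ 2 by apply: sqr_ge0.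
have h1 : 2 * c * (c * x ^+ 2 - c * m * `|x| - d * x) <= 2 * c * (y * x).
  by rewrite ler_pM2l ?mulr_gt0 //; lra.
have x2 : x ^+ 2 = `|x| ^+ 2 by rewrite real_normK ?num_real.
have s2 : 0 <= (`|x| - s) ^+ 2 by apply: sqr_ge0.
have u0 : 0 < s^-1 by rewrite invr_gt0.
have us : s * s^-1 = 1 by rewrite mulfV // gt_eqF.
have h2 : 2 * `|x| <= x ^+ 2 * s^-1 + s.
  have : s^-1 * (2 * s * `|x|) <= s^-1 * (x ^+ 2 + s ^+ 2).
    rewrite ler_pM2l //; rewrite x2; nra.
  have -> : s^-1 * (2 * s * `|x|) = 2 * `|x| * (s * s^-1) by ring.
  have -> : s^-1 * (x ^+ 2 + s ^+ 2) = x ^+ 2 * s^-1 + s * (s * s^-1) by ring.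
  by rewrite us !mulr1.
have cm0 : 0 < c ^+ 2 * m by rewrite mulr_gt0 // exprn_gt0.
have h3 : c ^+ 2 * m * (2 * `|x|) <= c ^+ 2 * m * (x ^+ 2 * s^-1 + s).
  by rewrite ler_pM2l.
nra.
Qed.

Lemma final_real_s (R : realType) (c m s : R) : 0 < c -> c <= 1 -> 0 < m -> 0 < s ->
  c ^+ 2 * (1 - (2 * m) / (c * s)) * s ^+ 2 <=
  (c ^+ 2 - c ^+ 2 * m / s) * s ^+ 2 + (- (c ^+ 2 * m * s)).
Proof.
move=> c0 c1 m0 s0.
have cs : c * s != 0 by rewrite mulf_neq0 // gt_eqF.
have sn : s != 0 by rewrite gt_eqF.
have cn : c != 0 by rewrite gt_eqF.
have -> : c ^+ 2 * (1 - 2 * m / (c * s)) * s ^+ 2 = c ^+ 2 * s ^+ 2 - 2 * c * m * s.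
  by field; rewrite ?mulf_neq0 ?gt_eqF.
have -> : (c ^+ 2 - c ^+ 2 * m / s) * s ^+ 2 + - (c ^+ 2 * m * s) =
  c ^+ 2 * s ^+ 2 - 2 * c * (c * m * s) by field; rewrite ?mulf_neq0 ?gt_eqF.
have : 0 < m * s by apply: mulr_gt0.
have : c * (m * s) <= 1 * (m * s) by rewrite ler_pM2r // mulr_gt0.
nra.
Qed.

Lemma final_real (R : realType) (c m v : R) : 0 < c -> c <= 1 -> 0 < m -> 0 < v ->
  c ^+ 2 * (1 - (2 * m) / (c * Num.sqrt v)) * v <=
  (c ^+ 2 - c ^+ 2 * m / Num.sqrt v) * v + (- (c ^+ 2 * m * Num.sqrt v)).
Proof.
move=> c0 c1 m0 v0.
have s0 : 0 < Num.sqrt v by rewrite sqrtr_gt0.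
have -> : v = Num.sqrt v ^+ 2 by rewrite sqr_sqrtr // ltW.
rewrite sqrtr_sqr gtr0_norm //.
exact: final_real_s.
Qed.

Section generic.
Local Open Scope ereal_scope.
Context d (T : measurableType d) (R : realType) (P : probability T R).

Lemma varE (X : T -> R) : 'V_P[X] =
  \int[P]_w (((X w - fine (\int[P]_w (X w)%:E)) ^+ 2)%:E).
Proof.
rewrite /variance covariance.unlock expectation.unlock.
by apply: eq_integral => w _ /=; rewrite expr2.
Qed.

Lemma int_of_fin (G : T -> R) : measurable_fun setT G -> (forall w, 0 <= G w)%R ->
  \int[P]_w (G w)%:E != +oo -> P.-integrable setT (EFin \o G).
Proof.
move=> mG G0 Gfin; apply/integrableP; split; first exact/measurable_EFinP.
rewrite (eq_integral (fun w => (G w)%:E)); first by rewrite ltey.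
by move=> w _ /=; rewrite ger0_norm.
Qed.

Lemma fin_of_int (G : T -> R) : (forall w, 0 <= G w)%R ->
  P.-integrable setT (EFin \o G) -> \int[P]_w (G w)%:E < +oo.
Proof.
move=> G0 /integrableP[_]; rewrite (eq_integral (fun w => (G w)%:E)) //.
by move=> w _ /=; rewrite ger0_norm.
Qed.


Lemma gen_inf (X Y : T -> R) (c m : R) :
  (0 < c)%R -> (0 < m)%R ->
  measurable_fun setT X -> measurable_fun setT Y ->
  (forall b : R, exists K : R, forall w,
     (c * (X w - b) ^+ 2 - c * m * `|X w - b| <= (Y w - K) * (X w - b))%R) ->
  'V_P[X] = +oo -> 'V_P[Y] = +oo.
Proof.
move=> c0 m0 mX mY key VX; apply: contrapT => VY.
move/eqP: VY; rewrite varE in VX * => VY.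
rewrite varE in VY.
move: VX VY.
set b := fine (\int[P]_w (X w)%:E).
set a := fine (\int[P]_w (Y w)%:E).
move=> VX VY.
have [K HK] := key b.
have mG : measurable_fun setT (fun w => (Y w - a) ^+ 2)%R.
  by apply: measurable_funX; apply: measurable_funB => //; exact: measurable_cst.
have iG := @int_of_fin _ mG (fun w => sqr_ge0 _) VY.
pose C := (2 * c ^+ 2 * m ^+ 2 + 4 * (a - K) ^+ 2)%R.
have iH : P.-integrable setT
    ((EFin \o cst (c^-2 * C)%R) \+ (fun w => (c^-2 * 4)%:E * (EFin \o (fun w => (Y w - a) ^+ 2)%R) w)).
  apply: integrableD => //; first exact: finite_measure_integrable_cst.
  by apply: integrableZl.
have mX2 : measurable_fun setT (fun w => (X w - b) ^+ 2)%R.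
  by apply: measurable_funX; apply: measurable_funB => //; exact: measurable_cst.
have iX : P.-integrable setT (EFin \o (fun w => (X w - b) ^+ 2)%R).
  apply: le_integrable iH => //; first exact/measurable_EFinP.
  move=> w _ /=.
  have c2 : (0 < c ^+ 2)%R by rewrite exprn_gt0.
  have hb := @bound_inf R c m _ _ c0 m0 (HK w).
  have hY : ((Y w - K) ^+ 2 <= 2 * (Y w - a) ^+ 2 + 2 * (a - K) ^+ 2)%R.
    have := sqr_ge0 (Y w - a - (a - K))%R; nra.
  have hx : ((X w - b) ^+ 2 <= c^-2 * C + c^-2 * 4 * (Y w - a) ^+ 2)%R.
    have -> : ((X w - b) ^+ 2 = c^-2 * (c ^+ 2 * (X w - b) ^+ 2))%R.
      by rewrite mulrA mulVf ?mul1r // gt_eqF.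
    rewrite -mulrA -mulrDr; apply: ler_wpM2l; first by rewrite invr_ge0 ltW.
    rewrite /C; lra.
  rewrite lee_fin ger0_norm ?sqr_ge0 //.
  apply: (le_trans hx); apply: ler_norm.
have := @fin_of_int _ (fun w => sqr_ge0 _) iX.
by rewrite VX ltxx.
Qed.


Lemma Ecst (r : R) : \int[P]_w (cst r w)%:E = r%:E.
Proof. by have := expectation_cst P r; rewrite expectation.unlock. Qed.

Lemma gen_fin (X Y : T -> R) (c m : R) :
  (0 < c)%R -> (0 < m)%R -> (c <= 1)%R ->
  measurable_fun setT X -> measurable_fun setT Y ->
  (forall b : R, exists K : R, forall w,
     (c * (X w - b) ^+ 2 - c * m * `|X w - b| <= (Y w - K) * (X w - b))%R) ->
  forall v : R, 'V_P[X] = v%:E ->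
     ((c ^+ 2 * (1 - (2 * m) / (c * Num.sqrt v)) * v)%:E <= 'V_P[Y]).
Proof.
move=> c0 m0 c1 mX mY key v VX.
have v0 : (0 <= v)%R by rewrite -lee_fin -VX variance_ge0.
have [->|vpos] := eqVneq v 0%R; first by rewrite mulr0 variance_ge0.
have {vpos v0} v0 : (0 < v)%R by rewrite lt_neqAle eq_sym vpos v0.
rewrite varE in VX.
move: VX; set b := fine (\int[P]_w (X w)%:E) => VX.
have mX1 : measurable_fun setT (fun w => X w - b)%R.
  by apply: measurable_funB => //; exact: measurable_cst.
have mX2 : measurable_fun setT (fun w => (X w - b) ^+ 2)%R.
  by apply: measurable_funX.
have iX2 : P.-integrable setT (EFin \o (fun w => (X w - b) ^+ 2)%R).
  by apply: int_of_fin => // [w|]; [exact: sqr_ge0 | rewrite VX].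
have i1 : P.-integrable setT (EFin \o cst (1%R : R)).
  exact: finite_measure_integrable_cst.
have iX1 : P.-integrable setT (EFin \o (fun w => X w - b)%R).
  apply: le_integrable (integrableD _ iX2 i1) => //; first exact/measurable_EFinP.
  move=> w _ /=; rewrite lee_fin.
  rewrite [X in (_ <= X)%R]ger0_norm; last by rewrite addr_ge0 ?sqr_ge0.
  have := sqr_ge0 (`|X w - b| - 1)%R.
  rewrite -[((X w - b) ^+ 2)%R]real_normK ?num_real //; nra.
have ib : P.-integrable setT (EFin \o cst b).
  exact: finite_measure_integrable_cst.
have iXX : P.-integrable setT (EFin \o X).
  apply: eq_integrable (integrableD _ iX1 ib) => // w _ /=.
  by rewrite -EFinD subrK.
have Xfin := integrable_fin_num measurableT iXX.
have int0 : \int[P]_w ((X w - b)%R)%:E = 0.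
  rewrite (eq_integral (fun w => (X w)%:E - (cst b w)%:E)); last first.
    by move=> w _; rewrite EFinB.
  rewrite integralB_EFin //.
  rewrite Ecst.
  by rewrite /b fineK // subee.
rewrite varE.
set a := fine (\int[P]_w (Y w)%:E).
have mG : measurable_fun setT (fun w => (Y w - a) ^+ 2)%R.
  by apply: measurable_funX; apply: measurable_funB => //; exact: measurable_cst.
have [VYoo|VYfin] := eqVneq (\int[P]_w ((Y w - a) ^+ 2)%:E) +oo.
  by rewrite VYoo leey.
have iG := @int_of_fin _ mG (fun w => sqr_ge0 _) VYfin.
have [K HK] := key b.
set s := Num.sqrt v.
have s0 : (0 < s)%R by rewrite sqrtr_gt0.
pose al := (c ^+ 2 - c ^+ 2 * m / s)%R.
pose be := (- (2 * c * (a - K)))%R.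
pose ga := (- (c ^+ 2 * m * s))%R.
have iL : P.-integrable setT (fun w => (al%:E * (EFin \o (fun w => (X w - b) ^+ 2)%R) w
     + be%:E * (EFin \o (fun w => X w - b)%R) w) + (EFin \o cst ga) w).
  apply: integrableD => //; last exact: finite_measure_integrable_cst.
  by apply: integrableD => //; apply: integrableZl.
have intL : \int[P]_w ((al%:E * (EFin \o (fun w => (X w - b) ^+ 2)%R) w
     + be%:E * (EFin \o (fun w => X w - b)%R) w) + (EFin \o cst ga) w)
     = (al * v + ga)%:E.
  rewrite integralD //; last 2 first.
    by apply: integrableD => //; apply: integrableZl.
    exact: finite_measure_integrable_cst.
  rewrite integralD //; try by apply: integrableZl.
  rewrite integralZl // integralZl //.
  rewrite [X in _ + X]Ecst.
  rewrite /comp VX int0 mule0 adde0.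
  by rewrite -EFinM -EFinD.
apply: (@le_trans _ _ (al * v + ga)%:E).
  by rewrite lee_fin; apply: final_real.
rewrite -intL; apply: le_integral => // w _ /=.
rewrite -!EFinM -!EFinD lee_fin.
apply: bound_fin => //.
by have -> : (Y w - a + (a - K) = Y w - K)%R by ring.
Qed.


End generic.

Theorem lemma4 (d : measure_display) (T : measurableType d) (R : realType)
  (P : probability T R) (c m : R) (f : int -> int) (B : T -> int) :
  0 < c -> 0 < m ->
  (forall i j : int, i <= j -> f i <= f j) ->
  (forall i j : int, i < j -> f j - f i <= j - i) ->
  (forall i j : int, i%:~R + m <= j%:~R ->
     c * (j - i)%:~R <= (f j - f i)%:~R) ->
  measurable_fun setT (int_rv R B) ->
  (\int[P]_w (`| int_rv R (f \o B) w |)%:E < +oo)%E ->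
  (forall v : R, 'V_P[int_rv R B] = v%:E ->
     ((c ^+ 2 * (1 - (2 * m) / (c * Num.sqrt v)) * v)%:E
        <= 'V_P[int_rv R (f \o B)])%E)
  /\ ('V_P[int_rv R B] = +oo%E -> 'V_P[int_rv R (f \o B)] = +oo%E).
Proof.
move=> c0 m0 fmono fup flow mX _.
have c1 := @c_le1 R c m f c0 m0 fup flow.
pose g := fun x : R => ((f (Num.floor x))%:~R : R).
have gmono : {homo g : x y / x <= y}.
  by move=> x y xy; rewrite /g ler_int; apply: fmono; apply: le_floor.
have eY : int_rv R (f \o B) = g \o int_rv R B.
  by apply: funext => w; rewrite /g /int_rv /= intrKfloor.
have mY : measurable_fun setT (int_rv R (f \o B)).
  rewrite eY; apply: measurableT_comp => //.
  exact: nondecreasing_measurable.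
have key : forall b : R, exists K : R, forall w,
    c * (int_rv R B w - b) ^+ 2 - c * m * `|int_rv R B w - b|
      <= (int_rv R (f \o B) w - K) * (int_rv R B w - b).
  move=> b; eexists => w; rewrite /int_rv /=.
  exact: (@key_int R c m f c0 m0 fmono flow b (B w)).
split.
- exact: (@gen_fin d T R P _ _ c m c0 m0 c1 mX mY key).
- exact: (@gen_inf d T R P _ _ c m c0 m0 mX mY key).
Qed.
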